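(* Let $\mathcal{H}_n$ be an $n$-dimensional Hilbert space, let $F=\{f_i\}_{i=1}^N$ be a frame for $\mathcal{H}_n$, and let $G=\{g_i\}_{i=1}^N$ be a $1$-uniform dual of $F$. Then \[ \sum_{i\neq j} |\langle f_i, g_j\rangle|^2 \;\geq\; n-\frac{n^2}{N}. \]
   Context: A finite sequence $F=\{f_i\}_{i=1}^N$ in $\mathcal{H}_n$ is a frame if there are constants $0<A'\le B'$ with $A'\|f\|^2\le\sum_{i=1}^N|\langle f,f_i\rangle|^2\le B'\|f\|^2$ for all $f\in\mathcal{H}_n$. A sequence $G=\{g_i\}_{i=1}^N$ in $\mathcal{H}_n$ is a dual frame (dual) of $F$ if $f=\sum_{i=1}^N\langle f,f_i\rangle g_i$ for all $f\in\mathcal{H}_n$. A dual $G$ of $F$ is called $1$-uniform if there is a constant $c\in\mathbb{C}$ with $\langle f_i,g_i\rangle=c$ for all $1\le i\le N$. *)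

(* Defs.v *)
(* H_n is modelled as C^n = 'rV[C]_n with the standard
   inner product, over an arbitrary numClosedFieldType C (e.g. the complex
   numbers). *)
From HB Require Import structures.
From mathcomp Require Import all_boot all_order all_algebra.
Set Implicit Arguments. Unset Strict Implicit. Unset Printing Implicit Defensive.
Import Order.TTheory GRing.Theory Num.Theory.
Local Open Scope ring_scope.

Definition inprod (C : numClosedFieldType) (n : nat) (u v : 'rV[C]_n) : C :=
  \sum_(k < n) u 0 k * (v 0 k)^*.

Definition normsq (C : numClosedFieldType) (n : nat) (u : 'rV[C]_n) : C :=
  inprod u u.

Definition is_frame (C : numClosedFieldType) (n N : nat) (F : 'I_N -> 'rV[C]_n) : Prop :=
  exists A B : C, [/\ 0 < A, A <= B &
    forall f : 'rV[C]_n,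
      A * normsq f <= \sum_(i < N) `|inprod f (F i)| ^+ 2 /\
      \sum_(i < N) `|inprod f (F i)| ^+ 2 <= B * normsq f].

Definition is_dual (C : numClosedFieldType) (n N : nat) (F G : 'I_N -> 'rV[C]_n) : Prop :=
  forall f : 'rV[C]_n, f = \sum_(i < N) inprod f (F i) *: G i.

Definition is_1_uniform_dual (C : numClosedFieldType) (n N : nat) (F G : 'I_N -> 'rV[C]_n) : Prop :=
  is_dual F G /\ exists c : C, forall i : 'I_N, inprod (F i) (G i) = c.

(* Main.v *)
Require Import Defs.
From HB Require Import structures.
From mathcomp Require Import all_boot all_order all_algebra.
Import Order.TTheory GRing.Theory Num.Theory.
Local Open Scope ring_scope.

Section Aux.
Variables (C : numClosedFieldType) (n N : nat).

Lemma inprod_conj (u v : 'rV[C]_n) : inprod v u = (inprod u v)^*.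
Proof.
rewrite /inprod rmorph_sum; apply: eq_bigr => k _.
by rewrite rmorphM /= conjCK mulrC.
Qed.

Lemma inprod_sumZ (a : 'I_N -> C) (G : 'I_N -> 'rV[C]_n) (g : 'rV[C]_n) :
  inprod (\sum_(j < N) a j *: G j) g = \sum_(j < N) a j * inprod (G j) g.
Proof.
rewrite /inprod.
under eq_bigr => k _ do rewrite summxE mulr_suml.
rewrite exchange_big /=; apply: eq_bigr => j _.
rewrite mulr_sumr; apply: eq_bigr => k _.
by rewrite mxE mulrA.
Qed.

Lemma amgm (a b : C) : 0 <= a -> 0 <= b -> a * b *+ 2 <= a ^+ 2 + b ^+ 2.
Proof.
move=> a0 b0.
have ra : a \is Num.real by apply: ger0_real.
have rb : b \is Num.real by apply: ger0_real.
have rab : a - b \is Num.real by apply: rpredB.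
rewrite -subr_ge0.
have -> : a ^+ 2 + b ^+ 2 - a * b *+ 2 = (a - b) ^+ 2.
  by rewrite sqrrB; rewrite addrAC.
by rewrite -real_normK // exprn_ge0.
Qed.

End Aux.

Theorem proposition2p6 (C : numClosedFieldType) (n N : nat)
  (F G : 'I_N -> 'rV[C]_n) :
  is_frame F -> is_1_uniform_dual F G ->
  \sum_(i < N) \sum_(j < N | i != j) `|inprod (F i) (G j)| ^+ 2
    >= n%:R - (n%:R) ^+ 2 / N%:R.
Proof.
move=> _ [dual [c Hc]].
set P := fun i j => inprod (F i) (G j).
have pol : forall f g, inprod f g = \sum_(j < N) inprod f (F j) * inprod (G j) g.
  by move=> f g; rewrite {1}(dual f) inprod_sumZ.
(* trace identity *)
have tr : \sum_(i < N) inprod (G i) (F i) = n%:R.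
  have e1 : forall k : 'I_n, 1 = \sum_(i < N) (F i 0 k)^* * G i 0 k.
    move=> k.
    have := congr1 (fun M : 'rV[C]_n => M 0 k) (dual (delta_mx 0 k)).
    rewrite /= mxE !eqxx /= summxE => H; apply: (etrans H).
    apply: eq_bigr => i _; rewrite mxE; congr (_ * _).
    rewrite /inprod (bigD1 k) //= mxE !eqxx /= mul1r big1 ?addr0 //.
    by move=> j jk; rewrite mxE (negbTE jk) andbF mul0r.
  rewrite /inprod exchange_big /=.
  rewrite -[n in n%:R]card_ord -sumr_const.
  apply: eq_bigr => k _; rewrite (e1 k); apply: eq_bigr => i _.
  by rewrite mulrC.
have trc : \sum_(i < N) inprod (F i) (G i) = n%:R.
  under eq_bigr => i _ do rewrite inprod_conj.
  rewrite -rmorph_sum tr; exact: conjC_nat.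
have Nc : N%:R * c = n%:R.
  by rewrite -trc (eq_bigr (fun=> c)) ?sumr_const ?card_ord ?mulr_natl.
have tr2 : n%:R = \sum_(i < N) \sum_(j < N) P j i * P i j.
  rewrite -trc; apply: eq_bigr => i _.
  rewrite inprod_conj pol rmorph_sum; apply: eq_bigr => j _.
  by rewrite rmorphM /= -!inprod_conj.
set S := \sum_(i < N) \sum_(j < N) `|P i j| ^+ 2.
have nS : n%:R <= S.
  rewrite -normr_nat tr2.
  apply: (le_trans (ler_norm_sum _ _ _)).
  apply: le_trans (_ : \sum_(i < N) \sum_(j < N) `|P j i| * `|P i j| <= _).
    apply: ler_sum => i _; apply: (le_trans (ler_norm_sum _ _ _)).
    by apply: ler_sum => j _; rewrite normrM.
  have twoS : S *+ 2 = \sum_(i < N) \sum_(j < N) (`|P j i| ^+ 2 + `|P i j| ^+ 2).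
    rewrite /S mulr2n {1}exchange_big /= -big_split /=.
    by apply: eq_bigr => i _; rewrite -big_split.
  rewrite -(ler_pMn2r (_ : (0 < 2)%N)) // twoS -sumrMnl.
  apply: ler_sum => i _; rewrite -sumrMnl; apply: ler_sum => j _.
  by apply: amgm.
have split : \sum_(i < N) \sum_(j < N | i != j) `|P i j| ^+ 2
   = S - \sum_(i < N) `|c| ^+ 2.
  rewrite /S -sumrB; apply: eq_bigr => i _.
  rewrite [in RHS](bigD1 i) //= /P /= Hc addrAC subrr add0r.
  by apply: eq_bigl => j; rewrite eq_sym.
rewrite /P in split; rewrite split sumr_const card_ord.
have [N0|N0] := eqVneq N 0%N.
  move: Nc; rewrite N0 mul0r => n0; rewrite -n0 mulr0n subr0.
  by rewrite expr0n mul0r subr0; apply: le_trans nS; rewrite ler0n.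
have N0' : N%:R != 0 :> C by rewrite pnatr_eq0.
have cE : c = n%:R / N%:R by apply: (mulfI N0'); rewrite Nc mulrCA mulfV // mulr1.
rewrite cE ger0_norm ?divr_ge0 ?ler0n //.
rewrite lerB //.
rewrite le_eqVlt; apply/orP; left; apply/eqP.
by rewrite expr_div_n -mulrnAr -[_ *+ N]mulr_natr -exprVn [N%:R^-1 ^+ 2]expr2 -[_ * _ * N%:R]mulrA mulVf // mulr1.
Qed.
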